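(* Let $\mathbf{c}\in H_{1,2,2}$ be primitive and let $p$ be a rational prime dividing $N(\mathbf{c})$. Then any left greatest common divisor of $\mathbf{c}$ and $p$ is a prime of $H_{1,2,2}$, and there is a unique primary element among the left greatest common divisors of $\mathbf{c}$ and $p$.
   Context: Let $\mathbf{i},\mathbf{j},\mathbf{k}$ be the standard quaternion units; $\overline{\mathbf{q}}$ is quaternion conjugation and $N(\mathbf{q})=\mathbf{q}\overline{\mathbf{q}}$. $H_{1,2,2}$ is the subring of the quaternions equal to the $\mathbb{Z}$-module generated by $\mathbf{v}_1=1$, $\mathbf{v}_2=\mathbf{i}$, $\mathbf{v}_3=\tfrac12(1+\mathbf{i}+\sqrt2\,\mathbf{j})$, $\mathbf{v}_4=\tfrac12(1+\mathbf{i}+\sqrt2\,\mathbf{k})$; it is norm Euclidean, so any two nonzero elements $\mathbf{a},\mathbf{b}$ have a left greatest common divisor $\mathbf{d}$: $\mathbf{a}=\mathbf{d}\mathbf{a}'$, $\mathbf{b}=\mathbf{d}\mathbf{b}'$ for some $\mathbf{a}',\mathbf{b}'\in H_{1,2,2}$ and $\mathbf{d}=\mathbf{a}\mathbf{x}+\mathbf{b}\mathbf{y}$ for some $\mathbf{x},\mathbf{y}\in H_{1,2,2}$; it is unique up to right multiplication by units (invertible elements). A prime of $H_{1,2,2}$ is a nonzero nonunit $\boldsymbol\pi$ such that any factorization $\boldsymbol\pi=\mathbf{a}\mathbf{b}$ in $H_{1,2,2}$ has $\mathbf{a}$ or $\mathbf{b}$ a unit. Let $I=2(1+\mathbf{i})H_{1,2,2}$.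 An element $\mathbf{q}$ is primary if $\mathbf{q}-1\in I$ or $\mathbf{q}-(1+2\mathbf{v}_3)\in I$. An element $\mathbf{c}=c_1\mathbf{v}_1+c_2\mathbf{v}_2+c_3\mathbf{v}_3+c_4\mathbf{v}_4$ ($c_i\in\mathbb{Z}$) is primitive if it is primary and $\gcd(c_1,c_2,c_3,c_4)=1$. *)

(* Defs.v *)
From mathcomp Require Import all_boot all_order all_algebra.
From mathcomp Require Import Rstruct.
Set Implicit Arguments. Unset Strict Implicit. Unset Printing Implicit Defensive.
Import Order.TTheory GRing.Theory Num.Theory.
Local Open Scope ring_scope.

Notation RR := Rdefinitions.R.

Record quat := Quat { q0 : RR; q1 : RR; q2 : RR; q3 : RR }.

Definition qadd (a b : quat) : quat :=
  Quat (q0 a + q0 b) (q1 a + q1 b) (q2 a + q2 b) (q3 a + q3 b).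
Definition qopp (a : quat) : quat := Quat (- q0 a) (- q1 a) (- q2 a) (- q3 a).
Definition qsub (a b : quat) : quat := qadd a (qopp b).
(* Hamilton product: i^2 = j^2 = k^2 = ijk = -1 *)
Definition qmul (a b : quat) : quat :=
  Quat (q0 a * q0 b - q1 a * q1 b - q2 a * q2 b - q3 a * q3 b)
       (q0 a * q1 b + q1 a * q0 b + q2 a * q3 b - q3 a * q2 b)
       (q0 a * q2 b - q1 a * q3 b + q2 a * q0 b + q3 a * q1 b)
       (q0 a * q3 b + q1 a * q2 b - q2 a * q1 b + q3 a * q0 b).
Definition qscal (r : RR) : quat := Quat r 0 0 0.
Definition qconj (a : quat) : quat := Quat (q0 a) (- q1 a) (- q2 a) (- q3 a).
Definition qN (a : quat) : quat := qmul a (qconj a).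

Definition qone : quat := qscal 1.
Definition qzero : quat := qscal 0.
Definition qi : quat := Quat 0 1 0 0.
Definition qj : quat := Quat 0 0 1 0.
Definition qk : quat := Quat 0 0 0 1.

Definition qzmul (n : int) (a : quat) : quat :=
  Quat (n%:~R * q0 a) (n%:~R * q1 a) (n%:~R * q2 a) (n%:~R * q3 a).

Definition s2 : RR := Num.sqrt 2.
Definition v1 : quat := qone.
Definition v2 : quat := qi.
Definition v3 : quat := Quat (1/2) (1/2) (s2/2) 0.
Definition v4 : quat := Quat (1/2) (1/2) 0 (s2/2).

Definition comb (c1 c2 c3 c4 : int) : quat :=
  qadd (qadd (qzmul c1 v1) (qzmul c2 v2)) (qadd (qzmul c3 v3) (qzmul c4 v4)).

Definition inH (q : quat) : Prop := exists c1 c2 c3 c4 : int, q = comb c1 c2 c3 c4.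

Definition unitH (u : quat) : Prop :=
  inH u /\ exists v, inH v /\ qmul u v = qone /\ qmul v u = qone.

Definition primeH (p : quat) : Prop :=
  inH p /\ p <> qzero /\ ~ unitH p /\
  forall a b, inH a -> inH b -> p = qmul a b -> unitH a \/ unitH b.

Definition lgcd (a b d : quat) : Prop :=
  inH d /\
  (exists a' b', inH a' /\ inH b' /\ a = qmul d a' /\ b = qmul d b') /\
  (exists x y, inH x /\ inH y /\ d = qadd (qmul a x) (qmul b y)).

Definition inI (q : quat) : Prop :=
  exists h, inH h /\ q = qmul (qzmul 2 (qadd qone qi)) h.

Definition primary (q : quat) : Prop :=
  inI (qsub q qone) \/ inI (qsub q (qadd qone (qzmul 2 v3))).

Definition primitive (c : quat) : Prop :=
  primary c /\
  exists c1 c2 c3 c4 : int,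
    c = comb c1 c2 c3 c4 /\ gcdz (gcdz c1 c2) (gcdz c3 c4) = 1.

(* Main.v *)
Require Import Defs.
From mathcomp Require Import all_boot all_order all_algebra Rstruct.
From mathcomp Require Import ring lra zify.
Set Implicit Arguments. Unset Strict Implicit. Unset Printing Implicit Defensive.
Import Order.TTheory GRing.Theory Num.Theory.
Local Open Scope ring_scope.

Record Z4 := mkZ4 { z1 : int; z2 : int; z3 : int; z4 : int }.

Definition mulZ (a b : Z4) : Z4 :=
  let: mkZ4 a1 a2 a3 a4 := a in let: mkZ4 b1 b2 b3 b4 := b in
  mkZ4 (a1 * b1 - a2 * b2 - a2 * b3 - a3 * b3 - a4 * b2 - a4 * b3 - a4 * b4)
       (a1 * b2 + a2 * b1 + a2 * b4 + a3 * b2 + a3 * b4 - a4 * b3)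
       (a1 * b3 - a2 * b4 + a3 * b1 + a3 * b3 + a4 * b2 + a4 * b3)
       (a1 * b4 + a2 * b3 - a3 * b2 + a4 * b1 + a4 * b3 + a4 * b4).

Definition emb (x : Z4) := comb (z1 x) (z2 x) (z3 x) (z4 x).

Lemma s2sq : s2 * s2 = 2.
Proof. by rewrite /s2 -expr2 sqr_sqrtr // ler0n. Qed.

Lemma s2_neq0 : s2 != 0.
Proof. apply/negP => /eqP h; have := s2sq; rewrite h mul0r => /eqP; rewrite eq_sym pnatr_eq0. done. Qed.

Lemma kill (K s : RR) : s * s = 2 -> K * (s * s - 2) = 0.
Proof. by move=> ->; rewrite subrr mulr0. Qed.

Lemma emb_mul a b : emb (mulZ a b) = qmul (emb a) (emb b).
Proof.
case: a b => [a1 a2 a3 a4] [b1 b2 b3 b4].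
rewrite /emb /comb /qmul /qadd /qzmul /v1 /v2 /v3 /v4 /qone /qscal /qi /=.
have hs := s2sq. move: s2 hs => s hs.
congr Quat.
- apply/eqP; rewrite -subr_eq0; apply/eqP.
  transitivity ((a3%:~R * b3%:~R + a4%:~R * b4%:~R) / 4 * (s * s - 2) : RR); first by field; rewrite ?pnatr_eq0.
  exact: kill.
- apply/eqP; rewrite -subr_eq0; apply/eqP.
  transitivity (- (a3%:~R * b4%:~R - a4%:~R * b3%:~R) / 4 * (s * s - 2) : RR); first by field; rewrite ?pnatr_eq0.
  exact: kill.
- by field; rewrite ?pnatr_eq0.
- by field; rewrite ?pnatr_eq0.
Qed.


Definition addZ (a b : Z4) := mkZ4 (z1 a + z1 b) (z2 a + z2 b) (z3 a + z3 b) (z4 a + z4 b).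
Definition oppZ (a : Z4) := mkZ4 (- z1 a) (- z2 a) (- z3 a) (- z4 a).
Definition subZ a b := addZ a (oppZ b).
Definition scaleZ (n : int) (a : Z4) := mkZ4 (n * z1 a) (n * z2 a) (n * z3 a) (n * z4 a).
Definition scalZ (n : int) := mkZ4 n 0 0 0.
Definition conjZ (a : Z4) := mkZ4 (z1 a + z3 a + z4 a) (- z2 a) (- z3 a) (- z4 a).
Definition normZ (a : Z4) : int :=
  z1 a ^+ 2 + z2 a ^+ 2 + (z1 a + z2 a) * (z3 a + z4 a) + z3 a ^+ 2 + z4 a ^+ 2 + z3 a * z4 a.

Ltac z4t := repeat match goal with a : Z4 |- _ => destruct a end;
  rewrite /subZ /mulZ /addZ /oppZ /scaleZ /scalZ /conjZ /normZ /=; try (congr mkZ4); ring.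

Lemma mulZA a b c : mulZ a (mulZ b c) = mulZ (mulZ a b) c. Proof. z4t. Qed.
Lemma mulZDr a b c : mulZ a (addZ b c) = addZ (mulZ a b) (mulZ a c). Proof. z4t. Qed.
Lemma mulZDl a b c : mulZ (addZ a b) c = addZ (mulZ a c) (mulZ b c). Proof. z4t. Qed.
Lemma mulZBr a b c : mulZ a (subZ b c) = subZ (mulZ a b) (mulZ a c). Proof. z4t. Qed.
Lemma mul1Z a : mulZ (scalZ 1) a = a. Proof. z4t. Qed.
Lemma mulZ1 a : mulZ a (scalZ 1) = a. Proof. z4t. Qed.
Lemma mulZ_conj a : mulZ a (conjZ a) = scalZ (normZ a). Proof. z4t. Qed.
Lemma mul_conjZ a : mulZ (conjZ a) a = scalZ (normZ a). Proof. z4t. Qed.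
Lemma mulscalZ n a : mulZ (scalZ n) a = scaleZ n a. Proof. z4t. Qed.
Lemma mulZscal n a : mulZ a (scalZ n) = scaleZ n a. Proof. z4t. Qed.
Lemma mulZ_scalel n a b : mulZ (scaleZ n a) b = scaleZ n (mulZ a b). Proof. z4t. Qed.
Lemma mulZ_scaler n a b : mulZ a (scaleZ n b) = scaleZ n (mulZ a b). Proof. z4t. Qed.
Lemma normZM a b : normZ (mulZ a b) = normZ a * normZ b. Proof. z4t. Qed.
Lemma normZ_conj a : normZ (conjZ a) = normZ a. Proof. z4t. Qed.
Lemma conjZK a : conjZ (conjZ a) = a. Proof. z4t. Qed.
Lemma normZ_scal n : normZ (scalZ n) = n ^+ 2. Proof. z4t. Qed.
Lemma normZ4 a : 4 * normZ a = (2 * z1 a + z3 a + z4 a) ^+ 2 + (2 * z2 a + z3 a + z4 a) ^+ 2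
   + 2 * z3 a ^+ 2 + 2 * z4 a ^+ 2.
Proof. z4t. Qed.
Lemma scaleZA m n a : scaleZ m (scaleZ n a) = scaleZ (m * n) a. Proof. z4t. Qed.
Lemma subZK a b : addZ (subZ a b) b = a. Proof. z4t. Qed.


Lemma normZ_ge0 a : 0 <= normZ a.
Proof.
have := normZ4 a. case: a => a1 a2 a3 a4 /=. nia.
Qed.

Lemma normZ_eq0 a : normZ a = 0 -> a = scalZ 0.
Proof.
have := normZ4 a. case: a => a1 a2 a3 a4 /= h h0.
rewrite h0 in h. rewrite /scalZ.
have h3 : a3 = 0 by nia.
have h4 : a4 = 0 by nia.
subst. have h1 : a1 = 0 by nia. have h2 : a2 = 0 by nia. by subst.
Qed.

Lemma scaleZ_inj n a b : n != 0 -> scaleZ n a = scaleZ n b -> a = b.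
Proof.
move=> hn; case: a b => a1 a2 a3 a4 [b1 b2 b3 b4] [] /=.
move=> /eqP; rewrite (inj_eq (mulfI hn)) => /eqP ->.
move=> /eqP; rewrite (inj_eq (mulfI hn)) => /eqP ->.
move=> /eqP; rewrite (inj_eq (mulfI hn)) => /eqP ->.
move=> /eqP; rewrite (inj_eq (mulfI hn)) => /eqP ->. done.
Qed.

Lemma mulZI d x y : normZ d != 0 -> mulZ d x = mulZ d y -> x = y.
Proof.
move=> hd h. apply: (scaleZ_inj hd).
by rewrite -!mulscalZ -mul_conjZ -!mulZA h.
Qed.

Lemma normZ_gt0 a : a <> scalZ 0 -> 0 < normZ a.
Proof.
move=> h; rewrite lt_def normZ_ge0 andbT; apply/eqP => /normZ_eq0. done.
Qed.

Lemma euclidZ a b : b <> scalZ 0 -> exists q, normZ (subZ a (mulZ b q)) < normZ b.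
Proof.
move=> hb. have n0 := normZ_gt0 hb. set n := normZ b in n0 *.
set y := mulZ (conjZ b) a.
have n2 : 0 < 2 * n by lia.
have n2' : (2 * n != 0) by lia.
pose rd (u : int) := ((u + n) %/ (2 * n))%Z.
have rdP u : - n <= u - 2 * n * rd u < n.
  have := divz_eq (u + n) (2 * n). have := modz_ge0 (u + n) n2'. have := ltz_pmod (u + n) n2.
  rewrite /rd. set e := ((u + n) %% (2 * n))%Z. set qq := ((u + n) %/ (2 * n))%Z. nia.
pose q3 := rd (2 * z3 y). pose q4 := rd (2 * z4 y).
pose r3 := z3 y - n * q3. pose r4 := z4 y - n * q4.
pose q1 := rd (2 * z1 y + r3 + r4). pose q2 := rd (2 * z2 y + r3 + r4).
exists (mkZ4 q1 q2 q3 q4).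
have key : mulZ (conjZ b) (subZ a (mulZ b (mkZ4 q1 q2 q3 q4))) = subZ y (scaleZ n (mkZ4 q1 q2 q3 q4)).
  by rewrite mulZBr mulZA mul_conjZ mulscalZ.
have := congr1 normZ key. rewrite normZM normZ_conj -/n.
have := normZ4 (subZ y (scaleZ n (mkZ4 q1 q2 q3 q4))).
have h3 := rdP (2 * z3 y). have h4 := rdP (2 * z4 y).
have h1 := rdP (2 * z1 y + r3 + r4). have h2 := rdP (2 * z2 y + r3 + r4).
rewrite -/q1 -/q2 -/q3 -/q4 in h1 h2 h3 h4.
set N := normZ (subZ y _). rewrite /= .
rewrite /r3 /r4 in h1 h2.
move=> eN hN.
have sq (w : int) : - n <= w <= n -> w ^+ 2 <= n ^+ 2.
  move=> hw; have : 0 <= (n - w) * (n + w) by apply: mulr_ge0; lia.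
  lia.
have b1 := sq (2 * (z1 y + - (n * q1)) + (z3 y + - (n * q3)) + (z4 y + - (n * q4))) ltac:(lia).
have b2 := sq (2 * (z2 y + - (n * q2)) + (z3 y + - (n * q3)) + (z4 y + - (n * q4))) ltac:(lia).
have b3 := sq (2 * (z3 y + - (n * q3))) ltac:(lia).
have b4 := sq (2 * (z4 y + - (n * q4))) ltac:(lia).
rewrite !exprMn in b3 b4.
set M := normZ (subZ a _) in hN *.
have hNn : N < n ^+ 2 by lia.
rewrite -hN in hNn.
rewrite expr2 in hNn. rewrite -(ltr_pM2l n0). done.
Qed.


Definition lgcdZ a b d := (exists a' b', a = mulZ d a' /\ b = mulZ d b') /\
  exists x y, d = addZ (mulZ a x) (mulZ b y).

Lemma lgcdZ0 a : lgcdZ a (scalZ 0) a.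
Proof.
split; first by exists (scalZ 1), (scalZ 0); split; z4t.
by exists (scalZ 1), (scalZ 0); z4t.
Qed.

Lemma lgcd_ex a b : exists d, lgcdZ a b d.
Proof.
move: {2}(absz (normZ b)) (leqnn (absz (normZ b))) => k.
elim: k a b => [|k IH] a b hk.
  have hb : normZ b = 0 by have := normZ_ge0 b; lia.
  by exists a; rewrite (normZ_eq0 hb); apply: lgcdZ0.
case: (boolP (normZ b == 0)) => [/eqP hb|hb].
  by exists a; rewrite (normZ_eq0 hb); apply: lgcdZ0.
have hb' : b <> scalZ 0 by move=> e; move: hb; rewrite e normZ_scal expr2 mulr0 eqxx.
have [q hq] := euclidZ a hb'.
set r := subZ a (mulZ b q) in hq.
have hk' : (absz (normZ r) <= k)%N by have := normZ_ge0 r; lia.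
have [d [[b' [r' [eb er]]] [x [y ed]]]] := IH b r hk'.
exists d; split.
  exists (addZ (mulZ b' q) r'), b'; split => //.
  have -> : a = addZ (mulZ b q) r by rewrite /r; z4t.
  rewrite eb er; z4t.
exists y, (subZ x (mulZ q y)). rewrite ed /r. z4t.
Qed.


Definition inIZ (x : Z4) : bool :=
  let L := mulZ (mkZ4 1 (-1) 0 0) x in
  [&& (4 %| z1 L)%Z, (4 %| z2 L)%Z, (4 %| z3 L)%Z & (4 %| z4 L)%Z].
Definition eps2 := mkZ4 1 0 2 0.
Definition primaryZ (x : Z4) : bool := inIZ (subZ x (scalZ 1)) || inIZ (subZ x eps2).
Definition eqZ4 (a b : Z4) : bool :=
  [&& z1 a == z1 b, z2 a == z2 b, z3 a == z3 b & z4 a == z4 b].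
Lemma eqZ4P a b : eqZ4 a b -> a = b.
Proof. by case: a b => ? ? ? ? [? ? ? ?] /and4P[/= /eqP-> /eqP-> /eqP-> /eqP->]. Qed.

Definition grid (r : seq int) : seq Z4 :=
  flatten (map (fun x1 => flatten (map (fun x2 => flatten (map (fun x3 =>
    map (fun x4 => mkZ4 x1 x2 x3 x4) r) r)) r)) r).

Lemma all_flat (T : Type) (P : pred T) (s : seq (seq T)) : all P (flatten s) = all (all P) s.
Proof. by elim: s => //= x s IH; rewrite all_cat IH. Qed.

Lemma gridP (P : pred Z4) r : all P (grid r) ->
  forall x1 x2 x3 x4, x1 \in r -> x2 \in r -> x3 \in r -> x4 \in r -> P (mkZ4 x1 x2 x3 x4).
Proof.
rewrite /grid all_flat all_map => /allP H x1 x2 x3 x4 h1 h2 h3 h4.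
move: (H x1 h1); rewrite /= all_flat all_map => /allP/(_ x2 h2).
rewrite /= all_flat all_map => /allP/(_ x3 h3).
rewrite /= all_map => /allP/(_ x4 h4). done.
Qed.
Definition reps := grid [:: 0; 1; 2; 3].
Definition box := grid [:: -2; -1; 0; 1; 2].
Definition U24 : seq Z4 := [:: mkZ4 (-1) (-1) 0 1; mkZ4 (-1) (-1) 1 0; mkZ4 (-1) (-1) 1 1; mkZ4 (-1) 0 0 0; mkZ4 (-1) 0 0 1; mkZ4 (-1) 0 1 0; mkZ4 0 (-1) 0 0; mkZ4 0 (-1) 0 1; mkZ4 0 (-1) 1 0; mkZ4 0 0 (-1) 0; mkZ4 0 0 (-1) 1; mkZ4 0 0 0 (-1); mkZ4 0 0 0 1; mkZ4 0 0 1 (-1); mkZ4 0 0 1 0; mkZ4 0 1 (-1) 0; mkZ4 0 1 0 (-1); mkZ4 0 1 0 0; mkZ4 1 0 (-1) 0; mkZ4 1 0 0 (-1); mkZ4 1 0 0 0; mkZ4 1 1 (-1) (-1); mkZ4 1 1 (-1) 0; mkZ4 1 1 0 (-1)].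

Lemma C1 : all (fun d => primaryZ d ==> ~~ (2 %| normZ d)%Z) reps.
Proof. by vm_compute. Qed.
Lemma C2 : all (fun d => ~~ (2 %| normZ d)%Z ==> has (fun t => primaryZ (mulZ d t)) U24) reps.
Proof. by vm_compute. Qed.
Lemma C3 : all (fun d => primaryZ d ==> all (fun t => primaryZ (mulZ d t) ==> eqZ4 t (scalZ 1)) U24) reps.
Proof. by vm_compute. Qed.
Lemma C4 : all (fun t => (normZ t == 1) ==> has (eqZ4 t) U24) box.
Proof. by vm_compute. Qed.
Lemma C5 : all (fun t => normZ t == 1) U24.
Proof. by vm_compute. Qed.


Definition red (x : Z4) := mkZ4 (z1 x %% 4)%Z (z2 x %% 4)%Z (z3 x %% 4)%Z (z4 x %% 4)%Z.
Definition quo (x : Z4) := mkZ4 (z1 x %/ 4)%Z (z2 x %/ 4)%Z (z3 x %/ 4)%Z (z4 x %/ 4)%Z.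

Lemma red_decomp x : x = addZ (red x) (scaleZ 4 (quo x)).
Proof.
case: x => x1 x2 x3 x4; rewrite /addZ /red /quo /scaleZ /=.
by congr mkZ4; rewrite mulrC addrC -divz_eq.
Qed.

Lemma in4 (k : int) : (0 <= k < 4) -> k \in [:: 0; 1; 2; 3].
Proof. move=> h; have : k = 0 \/ k = 1 \/ k = 2 \/ k = 3 by lia.
by case=> [->|[->|[->|->]]]. Qed.

Lemma in5 (k : int) : (-2 <= k <= 2) -> k \in [:: -2; -1; 0; 1; 2].
Proof. move=> h; have : k = -2 \/ k = -1 \/ k = 0 \/ k = 1 \/ k = 2 by lia.
by case=> [->|[->|[->|[->|->]]]]. Qed.

Lemma red_reps (P : pred Z4) x : all P reps -> P (red x).
Proof.
move=> /gridP H; apply: H; apply: in4; rewrite modz_ge0 // ltz_pmod //.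
Qed.

Lemma dvd4_shift a b : (4 %| a + 4 * b)%Z = (4 %| a)%Z.
Proof. by apply/idP/idP => /dvdz_mod0P h; apply/dvdz_mod0P; lia. Qed.

Lemma dvd2_shift a b : (2 %| a + 2 * b)%Z = (2 %| a)%Z.
Proof. by apply/idP/idP => /dvdz_mod0P h; apply/dvdz_mod0P; lia. Qed.

Lemma inIZ_shift x y : inIZ (addZ x (scaleZ 4 y)) = inIZ x.
Proof.
rewrite /inIZ.
have -> : mulZ (mkZ4 1 (-1) 0 0) (addZ x (scaleZ 4 y)) =
  addZ (mulZ (mkZ4 1 (-1) 0 0) x) (scaleZ 4 (mulZ (mkZ4 1 (-1) 0 0) y)) by z4t.
by rewrite /addZ /scaleZ /= !dvd4_shift.
Qed.

Lemma primaryZ_shift x y : primaryZ (addZ x (scaleZ 4 y)) = primaryZ x.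
Proof.
rewrite /primaryZ.
have h e : subZ (addZ x (scaleZ 4 y)) e = addZ (subZ x e) (scaleZ 4 y) by z4t.
by rewrite !h !inIZ_shift.
Qed.

Lemma parity_shift x y : (2 %| normZ (addZ x (scaleZ 4 y)))%Z = (2 %| normZ x)%Z.
Proof.
have -> : normZ (addZ x (scaleZ 4 y)) = normZ x +
  2 * (2 * (normZ (addZ x y) - normZ x - normZ y) + 8 * normZ y) by z4t.
by rewrite dvd2_shift.
Qed.

Lemma all_has (Q : pred Z4) s t : all Q s -> has (eqZ4 t) s -> Q t.
Proof.
elim: s => //= u s IH /andP[qu qs] /orP[/eqZ4P ->|h]; [done| exact: IH].
Qed.

Lemma primary_odd x : primaryZ x -> ~~ (2 %| normZ x)%Z.
Proof.
rewrite [x]red_decomp primaryZ_shift parity_shift.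
exact: (implyP (red_reps _ C1)).
Qed.

Lemma hasE (Q R : pred Z4) s : all R s -> has Q s -> exists t, R t /\ Q t.
Proof.
elim: s => //= u s IH /andP[ru rs] /orP[qu|h]; first by exists u.
exact: IH.
Qed.

Lemma primary_assoc x : ~~ (2 %| normZ x)%Z -> exists t, normZ t = 1 /\ primaryZ (mulZ x t).
Proof.
rewrite [x]red_decomp parity_shift => h.
have [t [/eqP nt pt]] := hasE C5 (implyP (red_reps _ C2) h).
by exists t; split => //; rewrite mulZDl mulZ_scalel primaryZ_shift.
Qed.

Lemma norm1_U24 t : normZ t = 1 -> has (eqZ4 t) U24.
Proof.
have := normZ4 t; case: t => t1 t2 t3 t4 /= h4 h1.
rewrite h1 in h4.
have b3 : -1 <= t3 <= 1 by nia.
have b4 : -1 <= t4 <= 1 by nia.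
have b1 : -2 <= 2 * t1 + t3 + t4 <= 2 by nia.
have b2 : -2 <= 2 * t2 + t3 + t4 <= 2 by nia.
have := gridP C4. move=> /(_ t1 t2 t3 t4); rewrite /= h1 eqxx /=. apply; apply: in5; lia.
Qed.

Lemma primary_unique x t : primaryZ x -> normZ t = 1 -> primaryZ (mulZ x t) -> t = scalZ 1.
Proof.
rewrite [x]red_decomp primaryZ_shift mulZDl mulZ_scalel primaryZ_shift => px nt pxt.
have := all_has (implyP (red_reps _ C3) px) (norm1_U24 nt).
by move=> /implyP/(_ pxt)/eqZ4P.
Qed.


Lemma int_factor2 (a b : int) (p : nat) : prime p -> 0 <= a -> 0 <= b ->
  a * b = (p%:Z) ^+ 2 -> a = 1 \/ a = p%:Z \/ a = (p%:Z) ^+ 2.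
Proof.
move=> pp; case: a => // na _; case: b => // nb _.
have e2 : (p%:Z) ^+ 2 = Posz (p ^ 2)%N by rewrite -natz -natrX natz.
rewrite -PoszM e2 => /eqP; rewrite eqz_nat => /eqP e.
have : (na %| p ^ 2)%N by rewrite -e dvdn_mulr.
case/(dvdn_pfactor _ _ pp) => k; case: k => [|[|[|k]]] // _ ->.
- by left.
- by right; left; rewrite expn1.
- by right; right; rewrite -e2.
Qed.

Lemma int_factor1 (a b : int) (p : nat) : prime p -> 0 <= a -> 0 <= b ->
  a * b = p%:Z -> a = 1 \/ b = 1.
Proof.
move=> pp; case: a => // na _; case: b => // nb _.
rewrite -PoszM => /eqP; rewrite eqz_nat => /eqP e.
have : (na %| p)%N by rewrite -e dvdn_mulr.
case/primeP: pp => p1 /[apply] /orP[/eqP ->|/eqP h]; first by left.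
right; subst na. have : (p * nb == p * 1)%N by rewrite muln1 e.
by rewrite eqn_mul2l; case/orP => [/eqP h|/eqP ->] //; subst.
Qed.

Definition unitZ u := exists v, mulZ u v = scalZ 1 /\ mulZ v u = scalZ 1.

Lemma unitZ_norm u : unitZ u <-> normZ u = 1.
Proof.
split.
  case=> v [h _]. have := congr1 normZ h; rewrite normZM normZ_scal expr1n.
  have := normZ_ge0 u; have := normZ_ge0 v.
  move: (normZ u) (normZ v) => a b hb ha hab.
  have b1 : 1 <= b by case: (b =P 0) => [e|/eqP]; [move: hab; rewrite e mulr0 | lia].
  have : 0 <= a * (b - 1) by apply: mulr_ge0; lia.
  nia.
move=> h; exists (conjZ u); by rewrite mulZ_conj mul_conjZ h.
Qed.

Lemma conjZ_scale n a : conjZ (scaleZ n a) = scaleZ n (conjZ a). Proof. z4t. Qed.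

Lemma e1_aux (cc x y : Z4) (p m : int) : addZ (mulZ (scalZ (p * m)) x) (mulZ cc (mulZ (scalZ p) y)) =
  scaleZ p (addZ (scaleZ m x) (mulZ cc y)).
Proof. z4t. Qed.

Section Core.
Variables (c : Z4) (p : nat) (m : int).
Hypothesis hg : gcdz (gcdz (z1 c) (z2 c)) (gcdz (z3 c) (z4 c)) = 1.
Hypothesis hprim : primaryZ c.
Hypothesis pp : prime p.
Hypothesis hN : normZ c = p%:Z * m.

Let P := scalZ p.

Lemma not_scaled z : c <> scaleZ p z.
Proof.
move=> e.
have : (p%:Z %| gcdz (gcdz (z1 c) (z2 c)) (gcdz (z3 c) (z4 c)))%Z.
  by rewrite e /= !dvdz_gcd !dvdz_mulr ?dvdzz.
rewrite hg dvdz1 /= => /eqP p1. by move: (prime_gt1 pp); rewrite p1.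
Qed.

Lemma p_neq0 : p%:Z != 0.
Proof. by have := prime_gt1 pp; lia. Qed.

Lemma norm_lgcd d : lgcdZ c P d -> normZ d = p.
Proof.
case=> [[a' [b' [ea eb]]] [x [y ed]]].
have hnp : normZ d * normZ b' = (p%:Z) ^+ 2 by rewrite -normZM -eb normZ_scal.
case: (int_factor2 pp (normZ_ge0 d) (normZ_ge0 b') hnp) => [h1|[//|h2]].
  exfalso.
  have e1 : mulZ (conjZ c) d = scaleZ p (addZ (scaleZ m x) (mulZ (conjZ c) y)).
    rewrite {1}ed mulZDr mulZA mul_conjZ hN /P; exact: e1_aux.
  have e2 : conjZ c = scaleZ p (mulZ (addZ (scaleZ m x) (mulZ (conjZ c) y)) (conjZ d)).
    by rewrite -mulZ_scalel -e1 -mulZA mulZ_conj h1 mulZ1.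
  apply: (@not_scaled (conjZ (mulZ (addZ (scaleZ m x) (mulZ (conjZ c) y)) (conjZ d)))).
  by rewrite -conjZ_scale -e2 conjZK.
exfalso.
have hb : normZ b' = 1.
  move: hnp; rewrite h2 => /eqP; rewrite -{2}(mulr1 (_ ^+ 2)) (inj_eq (mulfI _)) ?expf_neq0 ?p_neq0 //.
  by move/eqP.
have ed' : d = scaleZ p (conjZ b').
  by rewrite -mulscalZ -/P eb -mulZA mulZ_conj hb mulZ1.
apply: (@not_scaled (mulZ (conjZ b') a')).
by rewrite ea ed' mulZ_scalel.
Qed.

Definition primeZ d := d <> scalZ 0 /\ ~ unitZ d /\
  forall a b, d = mulZ a b -> unitZ a \/ unitZ b.

Lemma prime_of_norm d : normZ d = p -> primeZ d.
Proof.
move=> hd; split; [|split].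
- move=> e; move: hd; rewrite e normZ_scal expr2 mulr0 => /eqP.
  by rewrite eq_sym (negPf p_neq0).
- move/unitZ_norm; rewrite hd => /eqP; have := prime_gt1 pp. lia.
- move=> a b e; rewrite !unitZ_norm.
  apply: (int_factor1 pp (normZ_ge0 a) (normZ_ge0 b)).
  by rewrite -normZM -e.
Qed.

Lemma exists_unique_primary : exists d, lgcdZ c P d /\ primaryZ d /\
  forall d', lgcdZ c P d' -> primaryZ d' -> d' = d.
Proof.
have [d0 hd0] := lgcd_ex c P.
have n0 := norm_lgcd hd0.
have odd0 : ~~ (2 %| normZ d0)%Z.
  rewrite n0; apply/negP => h2.
  have := primary_odd hprim; rewrite hN dvdz_mulr //.
have [t [nt pt]] := primary_assoc odd0.
exists (mulZ d0 t); split; [|split] => //.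
  case: hd0 => [[a' [b' [ea eb]]] [x [y ed]]]; split.
    exists (mulZ (conjZ t) a'), (mulZ (conjZ t) b').
    by rewrite -!mulZA !(mulZA t) mulZ_conj nt !mul1Z.
  exists (mulZ x t), (mulZ y t). by rewrite ed mulZDl -!mulZA.
move=> d' [[a' [b' [ea eb]]] [x [y ed]]] pd'.
case: hd0 => [[a0 [b0 [ea0 eb0]]] _].
set d := mulZ d0 t.
have e1 : c = mulZ d (mulZ (conjZ t) a0) by rewrite /d -mulZA (mulZA t) mulZ_conj nt mul1Z.
have e2 : P = mulZ d (mulZ (conjZ t) b0) by rewrite /d -mulZA (mulZA t) mulZ_conj nt mul1Z.
set w := addZ (mulZ (mulZ (conjZ t) a0) x) (mulZ (mulZ (conjZ t) b0) y).
have ew : d' = mulZ d w by rewrite ed {1}e1 {1}e2 /w mulZDr !mulZA.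
have nd : normZ d = p by rewrite /d normZM n0 nt mulr1.
have nw : normZ w = 1.
  have := norm_lgcd (conj (ex_intro _ a' (ex_intro _ b' (conj ea eb))) (ex_intro _ x (ex_intro _ y ed))).
  rewrite ew normZM nd => /eqP; rewrite -{2}(mulr1 (Posz p)) (inj_eq (mulfI p_neq0)).
  by move/eqP.
have pdw : primaryZ (mulZ d w) by rewrite -ew.
have hw := primary_unique pt nw pdw.
by rewrite ew hw mulZ1.
Qed.

End Core.


Ltac qunf := rewrite /emb /comb /qmul /qadd /qopp /qsub /qzmul /qconj /v1 /v2 /v3 /v4 /qone /qzero /qscal /qi /=.

Lemma emb_add a b : emb (addZ a b) = qadd (emb a) (emb b).
Proof. case: a b => a1 a2 a3 a4 [b1 b2 b3 b4]; qunf; congr Quat; field; rewrite ?pnatr_eq0 //. Qed.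

Lemma emb_opp a : emb (oppZ a) = qopp (emb a).
Proof. case: a => a1 a2 a3 a4; qunf; congr Quat; field; rewrite ?pnatr_eq0 //. Qed.

Lemma emb_sub a b : emb (subZ a b) = qsub (emb a) (emb b).
Proof. by rewrite /subZ emb_add emb_opp. Qed.

Lemma emb_conj a : emb (conjZ a) = qconj (emb a).
Proof. case: a => a1 a2 a3 a4; qunf; congr Quat; field; rewrite ?pnatr_eq0 //. Qed.

Lemma emb_scal n : emb (scalZ n) = qscal n%:~R.
Proof. qunf; congr Quat; field; rewrite ?pnatr_eq0 //. Qed.

Lemma qN_emb a : qN (emb a) = qscal (normZ a)%:~R.
Proof. by rewrite /qN -emb_conj -emb_mul mulZ_conj emb_scal. Qed.

Lemma qone_emb : qone = emb (scalZ 1).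
Proof. by rewrite emb_scal. Qed.

Lemma qzero_emb : qzero = emb (scalZ 0).
Proof. by rewrite emb_scal. Qed.

Lemma qI_emb : qzmul 2 (qadd qone qi) = emb (mkZ4 2 2 0 0).
Proof. qunf; congr Quat; field; rewrite ?pnatr_eq0 //. Qed.

Lemma eps2_emb : qadd qone (qzmul 2 v3) = emb eps2.
Proof. rewrite /eps2; qunf; congr Quat; field; rewrite ?pnatr_eq0 //. Qed.

Lemma qscal_emb (p : nat) : qscal p%:R = emb (scalZ p).
Proof. by rewrite emb_scal; congr qscal; rewrite -?pmulrn. Qed.

Lemma emb_inj a b : emb a = emb b -> a = b.
Proof.
case: a b => a1 a2 a3 a4 [b1 b2 b3 b4]; qunf. case=> h0 h1 h2 h3.
have e3 : a3 = b3.
  have : (a3%:~R - b3%:~R) * s2 = 2 * 0 :> RR.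
    rewrite -(subrr (b1%:~R * 0 + b2%:~R * 0 + (b3%:~R * (s2 / 2) + b4%:~R * 0))) -{1}h2. by field; rewrite ?pnatr_eq0.
  rewrite mulr0 => /eqP; rewrite mulf_eq0 (negPf s2_neq0) orbF subr_eq0 => /eqP. exact: intr_inj.
have e4 : a4 = b4.
  have : (a4%:~R - b4%:~R) * s2 = 2 * 0 :> RR.
    rewrite -(subrr (b1%:~R * 0 + b2%:~R * 0 + (b3%:~R * 0 + b4%:~R * (s2 / 2)))) -{1}h3. by field; rewrite ?pnatr_eq0.
  rewrite mulr0 => /eqP; rewrite mulf_eq0 (negPf s2_neq0) orbF subr_eq0 => /eqP. exact: intr_inj.
subst.
have e1 : a1 = b1 by apply: (@intr_inj RR); lra.
have e2 : a2 = b2 by apply: (@intr_inj RR); lra.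
by subst.
Qed.


Lemma inH_emb q : inH q -> exists x, q = emb x.
Proof. by case=> [c1 [c2 [c3 [c4 ->]]]]; exists (mkZ4 c1 c2 c3 c4). Qed.

Lemma emb_inH x : inH (emb x).
Proof. by exists (z1 x), (z2 x), (z3 x), (z4 x). Qed.

Definition gZ := mkZ4 2 2 0 0.
Definition LZ := mkZ4 1 (-1) 0 0.

Lemma inI_emb x : inI (emb x) <-> inIZ x.
Proof.
split.
  case=> h [/inH_emb [h0 ->]]; rewrite qI_emb -emb_mul => /emb_inj ->.
  rewrite /inIZ mulZA (_ : mulZ (mkZ4 1 (-1) 0 0) (mkZ4 2 2 0 0) = scalZ 4); last by z4t.
  by rewrite mulscalZ /= !dvdz_mulr ?dvdzz.
rewrite /inIZ; set L := mulZ _ x => /and4P [d1 d2 d3 d4].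
pose h0 := mkZ4 (z1 L %/ 4)%Z (z2 L %/ 4)%Z (z3 L %/ 4)%Z (z4 L %/ 4)%Z.
have eL : L = scaleZ 4 h0.
  by case: L d1 d2 d3 d4 @h0 => l1 l2 l3 l4 /= d1 d2 d3 d4; rewrite /scaleZ /=;
     congr mkZ4; rewrite mulrC divzK.
have ex : x = mulZ gZ h0.
  apply: (@scaleZ_inj 4) => //.
  rewrite -mulZ_scaler -eL /L -mulscalZ mulZA /gZ. congr mulZ; z4t.
exists (emb h0); split; first exact: emb_inH.
by rewrite qI_emb -emb_mul ex.
Qed.

Lemma primary_emb x : primary (emb x) <-> primaryZ x.
Proof.
rewrite /primary /primaryZ eps2_emb qone_emb -!emb_sub !inI_emb.
by split => [[->|->]|/orP[]]; rewrite ?orbT //; [left|right].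
Qed.

Lemma unitH_emb u : unitH (emb u) <-> unitZ u.
Proof.
split.
  case=> _ [v [/inH_emb [v0 ->]]]; rewrite qone_emb -!emb_mul => [[/emb_inj h1 /emb_inj h2]].
  by exists v0.
case=> v [h1 h2]; split; first exact: emb_inH.
by exists (emb v); split; [exact: emb_inH|]; rewrite qone_emb -!emb_mul h1 h2.
Qed.

Lemma lgcd_emb a b d : lgcd (emb a) (emb b) d -> exists d0, d = emb d0 /\ lgcdZ a b d0.
Proof.
case=> /inH_emb [d0 ->] [[a' [b' [/inH_emb [a0 ->] [/inH_emb [b0 ->]]]]]].
rewrite -!emb_mul => [[/emb_inj ea /emb_inj eb]].
case=> x [y [/inH_emb [x0 ->] [/inH_emb [y0 ->]]]].
rewrite -!emb_mul -emb_add => /emb_inj ed.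
exists d0; split => //; split; [by exists a0, b0 | by exists x0, y0].
Qed.

Lemma emb_lgcd a b d : lgcdZ a b d -> lgcd (emb a) (emb b) (emb d).
Proof.
case=> [[a' [b' [ea eb]]] [x [y ed]]]; split; first exact: emb_inH.
split.
  exists (emb a'), (emb b'); do 2 (split; first exact: emb_inH).
  by rewrite -!emb_mul -ea -eb.
exists (emb x), (emb y); do 2 (split; first exact: emb_inH).
by rewrite -!emb_mul -emb_add -ed.
Qed.

Theorem lemma51 (c : quat) (p : nat) :
  inH c -> primitive c -> prime p ->
  (exists m : int, qN c = qscal (((p%:Z * m)%:~R : RR))) ->
  (forall d, lgcd c (qscal p%:R) d -> primeH d) /\
  (exists d, (lgcd c (qscal p%:R) d /\ primary d) /\
     forall d', lgcd c (qscal p%:R) d' /\ primary d' -> d' = d).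
Proof.
move=> /inH_emb [c0 ->] [/primary_emb hpr [c1 [c2 [c3 [c4 [ec hg]]]]]] pp [m hm].
have ec0 : c0 = mkZ4 c1 c2 c3 c4 by apply: emb_inj; rewrite ec.
have hg0 : gcdz (gcdz (z1 c0) (z2 c0)) (gcdz (z3 c0) (z4 c0)) = 1 by rewrite ec0.
have hN : normZ c0 = p%:Z * m.
  move: hm; rewrite qN_emb /qscal => [[/intr_inj]] //.
rewrite qscal_emb.
split.
  move=> d /lgcd_emb [d0 [-> hd]].
  have nd := norm_lgcd hg0 hpr pp hN hd.
  have [h1 [h2 h3]] := prime_of_norm hg0 hpr pp hN nd.
  split; first exact: emb_inH.
  split; first by rewrite qzero_emb => /emb_inj.
  split; first by move/unitH_emb.
  move=> a b /inH_emb [a0 ->] /inH_emb [b0 ->]; rewrite -emb_mul => /emb_inj /h3.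
  by case=> h; [left|right]; apply/unitH_emb.
have [d [hd [pd uq]]] := exists_unique_primary hg0 hpr pp hN.
exists (emb d); split; first by split; [exact: emb_lgcd | apply/primary_emb].
move=> d' [/lgcd_emb [d0 [-> hd0]] /primary_emb pd0].
by rewrite (uq d0 hd0 pd0).
Qed.
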